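(* Let $n\ge 1$ and $m$ be integers with $n-|m|$ even and non-negative, let $R_n^{|m|}(r)=r^{|m|}\,P^{(0,|m|)}_{\frac{n-|m|}{2}}(2r^2-1)$ for $0\le r\le1$, and let $k\ge1$ be an integer. Put \[ B_{n,k}=\frac{n^2(n^2-1^2)\cdots(n^2-(k-1)^2)}{2^k\,(1/2)_k},\qquad a_n=2\Bigl(\tfrac12\Bigr)^n\binom{n}{\frac{n-|m|}{2}}. \] Then $\max_{0\le r\le1}|(R_n^{|m|})^{(k)}(r)|$ is attained at $r=1$, and \[ a_n\,B_{n,k}\;\le\;(R_n^{|m|})^{(k)}(1)\;\le\;B_{n,k}. \]
   Context: $P_p^{(\alpha,\beta)}$ denotes the Jacobi polynomial of degree $p$ orthogonal with respect to the weight $(1-x)^\alpha(1+x)^\beta$ on $[-1,1]$, with standard normalization $P_p^{(\alpha,\beta)}(1)=\binom{p+\alpha}{p}$. $f^{(k)}$ denotes the $k$-th derivative. $(\alpha)_k=\alpha(\alpha+1)\cdots(\alpha+k-1)$ is the Pochhammer symbol, $(\alpha)_0=1$. *)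

(* Defs.v *)
From HB Require Import structures.
From mathcomp Require Import all_boot all_order all_algebra.
From mathcomp Require Import reals.
Set Implicit Arguments. Unset Strict Implicit. Unset Printing Implicit Defensive.
Import Order.TTheory GRing.Theory Num.Theory.
Local Open Scope ring_scope.

(* Jacobi polynomial P_p^{(alpha,beta)} for nonnegative integer parameters,
   with the standard normalization P(1) = binom(p+alpha, p), given by the
   explicit formula (Szego (4.3.2) / DLMF 18.5.8):
   P_p^{(a,b)}(x) = sum_{s=0}^p C(p+a, p-s) C(p+b, s) ((x-1)/2)^s ((x+1)/2)^(p-s). *)
Definition jacobi {R : fieldType} (p a b : nat) : {poly R} :=
  \sum_(s < p.+1)
     ((('C(p + a, p - s) * 'C(p + b, s))%N)%:R
       *: ((2^-1 *: ('X - 1)) ^+ s * (2^-1 *: ('X + 1)) ^+ (p - s))).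

Definition zernikeR {R : fieldType} (n M : nat) : {poly R} :=
  'X ^+ M * (jacobi ((n - M) %/ 2) 0 M \Po (2%:R *: 'X ^+ 2 - 1)).

Definition pochhammer {R : ringType} (x : R) (k : nat) : R :=
  \prod_(i < k) (x + i%:R).

Definition Bnk {R : fieldType} (n k : nat) : R :=
  (\prod_(j < k) ((n%:R) ^+ 2 - (j%:R) ^+ 2))
    / (2%:R ^+ k * pochhammer (2^-1 : R) k).

Definition a_coef {R : fieldType} (n M : nat) : R :=
  2%:R * (2^-1) ^+ n * ('C(n, (n - M) %/ 2))%:R.

(* Main.v *)
Require Import Defs.
From HB Require Import structures.
From mathcomp Require Import all_boot all_order all_algebra.
From mathcomp Require Import reals.
From mathcomp Require Import ring lra zify.
Import Order.TTheory GRing.Theory Num.Theory.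
Local Open Scope ring_scope.



Fixpoint TU {R : realType} (k : nat) : {poly R} * {poly R} :=
  match k with
  | 0%N => (1, 0)
  | k'.+1 => ('X * (TU k').1 + ('X ^+ 2 - 1) * (TU k').2, (TU k').1 + 'X * (TU k').2)
  end.
Definition Tc {R : realType} k : {poly R} := (TU k).1.
Definition Vc {R : realType} k : {poly R} := (TU k).2.

Lemma TS {R : realType} k : Tc (R:=R) k.+1 = 'X * Tc k + ('X ^+ 2 - 1) * Vc k.
Proof. by []. Qed.
Lemma VS {R : realType} k : Vc (R:=R) k.+1 = Tc k + 'X * Vc k.
Proof. by []. Qed.
Lemma T0 {R : realType} : Tc (R:=R) 0 = 1. Proof. by []. Qed.
Lemma V0 {R : realType} : Vc (R:=R) 0 = 0. Proof. by []. Qed.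

Lemma pell {R : realType} k : Tc (R:=R) k ^+ 2 - ('X ^+ 2 - 1) * Vc k ^+ 2 = 1.
Proof.
elim: k => [|k IH]; first by rewrite T0 V0; ring.
rewrite TS VS; rewrite -[RHS]IH; ring.
Qed.

Lemma T_bound {R : realType} k (x : R) : -1 <= x <= 1 -> `|(Tc k).[x]| <= 1.
Proof.
move=> /andP [h1 h2].
have := congr1 (horner^~ x) (pell (R:=R) k).
rewrite !hornerE /= => H.
have h3 : (Tc k).[x] ^+ 2 <= 1.
  have : (x ^+ 2 - 1) * (Vc k).[x] ^+ 2 <= 0.
    apply: mulr_le0_ge0; last exact: sqr_ge0.
    nra.
  move: H; rewrite !expr2; nra.
rewrite ler_norml; move: h3; rewrite expr2 => h3; apply/andP; split; nra.
Qed.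

Lemma T1 {R : realType} k : (Tc (R:=R) k).[1] = 1.
Proof. elim: k => [|k IH]; first by rewrite T0 hornerE. by rewrite TS !hornerE IH; ring. Qed.

Lemma dTV {R : realType} k :
  (Tc (R:=R) k)^`() = Vc k *+ k /\ ('X ^+ 2 - 1) * (Vc (R:=R) k)^`() = Tc k *+ k - 'X * Vc k.
Proof.
elim: k => [|k [IH1 IH2]]; first by rewrite T0 V0 derivC deriv0 mulr0 !mulr0n mulr0 subr0.
have dX2 : ('X ^+ 2 - 1 : {poly R})^`() = 'X *+ 2.
  by rewrite derivB derivXn derivC subr0 expr1.
split.
  rewrite TS VS derivD !derivM derivX dX2 IH2 IH1; ring.
rewrite VS derivD derivM derivX IH1 TS.
have -> : ('X ^+ 2 - 1) * (Vc (R:=R) k *+ k + (1 * Vc k + 'X * (Vc k)^`())) =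
   ('X ^+ 2 - 1) * (Vc k *+ k + Vc k) + 'X * (('X ^+ 2 - 1) * (Vc k)^`()) by ring.
rewrite IH2; ring.
Qed.

Lemma T_rec {R : realType} k : Tc (R:=R) k.+2 = 'X * Tc k.+1 *+ 2 - Tc k.
Proof. rewrite !TS !VS mulr2n; ring. Qed.
Lemma V_rec {R : realType} k : Vc (R:=R) k.+2 = Vc k + Tc k.+1 *+ 2.
Proof. rewrite !VS !TS mulr2n; ring. Qed.

Inductive cone {R : realType} : {poly R} -> Prop :=
 | cone0 : cone 0
 | coneS c k p : 0 <= c -> cone p -> cone (c *: Tc k + p).

Lemma cone_add {R : realType} (p q : {poly R}) : cone p -> cone q -> cone (p + q).
Proof. move=> hp hq; elim: hp => [|c k p' hc _ IH]; first by rewrite add0r.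
by rewrite -addrA; apply: coneS. Qed.

Lemma cone_scale {R : realType} (a : R) (p : {poly R}) : 0 <= a -> cone p -> cone (a *: p).
Proof. move=> ha; elim => [|c k p' hc _ IH]; first by rewrite scaler0; constructor.
by rewrite scalerDr scalerA; apply: coneS => //; apply: mulr_ge0. Qed.

Lemma cone_muln {R : realType} (p : {poly R}) n : cone p -> cone (p *+ n).
Proof. by move=> h; rewrite -scaler_nat; apply: cone_scale. Qed.

Lemma cone_T {R : realType} k : cone (Tc (R:=R) k).
Proof. by rewrite -[Tc k]addr0 -[Tc k]scale1r; apply: coneS => //; constructor. Qed.

Lemma cone_sum {R : realType} n (F : nat -> {poly R}) :
  (forall i, cone (F i)) -> cone (\sum_(i < n) F i).
Proof. move=> h; apply: (big_ind cone) => //; [constructor | exact: cone_add]. Qed.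

Lemma cone_V {R : realType} k : cone (Vc (R:=R) k).
Proof.
suff : cone (Vc (R:=R) k) /\ cone (Vc (R:=R) k.+1) by case.
elim: k => [|k [h1 h2]]; split => //.
- rewrite V0; constructor.
- rewrite VS V0 mulr0 addr0; exact: cone_T.
- rewrite V_rec; apply: cone_add => //; apply: cone_muln; exact: cone_T.
Qed.

Lemma cone_dT {R : realType} k : cone (Tc (R:=R) k)^`().
Proof. by case: (dTV (R:=R) k) => -> _; apply: cone_muln; apply: cone_V. Qed.

Lemma cone_deriv {R : realType} (p : {poly R}) : cone p -> cone p^`().
Proof. elim => [|c k p' hc _ IH]; first by rewrite deriv0; constructor.
rewrite derivD derivZ; apply: cone_add => //; apply: cone_scale => //; exact: cone_dT. Qed.

Lemma cone_derivn {R : realType} (p : {poly R}) k : cone p -> cone p^`(k).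
Proof. move=> h; elim: k => [|k IH]; first by rewrite derivn0.
by rewrite derivnS; apply: cone_deriv. Qed.

Lemma cone_bound {R : realType} (p : {poly R}) (x : R) : cone p -> -1 <= x <= 1 ->
  `|p.[x]| <= p.[1].
Proof.
move=> h hx; elim: h => [|c k p' hc _ IH]; first by rewrite !hornerE normr0.
rewrite !hornerE T1 mulr1.
apply: le_trans (ler_normD _ _) _; apply: lerD => //.
rewrite normrM ger0_norm // -[leRHS]mulr1; apply: ler_wpM2l => //; exact: T_bound.
Qed.

Lemma cone_ge0 {R : realType} (p : {poly R}) : cone p -> 0 <= p.[1].
Proof. move=> h; have hx : -1 <= (1:R) <= 1 by rewrite lexx andbT; lra.
have := cone_bound _ _ h hx; apply: le_trans; exact: normr_ge0. Qed.

Lemma cone_mono {R : realType} k : cone ((Tc (R:=R) k.+2)^`() - (Tc k)^`()).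
Proof.
have [h1 _] := dTV (R:=R) k; have [h2 _] := dTV (R:=R) k.+2.
have -> : (Tc (R:=R) k.+2)^`() - (Tc k)^`() = Vc k *+ 2 + Tc k.+1 *+ (2 * k.+2).
  rewrite h1 h2 V_rec; ring.
by apply: cone_add; apply: cone_muln; [apply: cone_V | apply: cone_T].
Qed.

Lemma dT_mono {R : realType} i k : (1 <= k)%N ->
  ((Tc (R:=R) i)^`(k)).[1] <= ((Tc (R:=R) i.+2)^`(k)).[1].
Proof.
case: k => // k _.
rewrite -subr_ge0.
have -> : forall a b : {poly R}, a.[1] - b.[1] = (a - b).[1] by move=> a b; rewrite hornerD hornerN.
rewrite !derivSn -derivnB.
apply: cone_ge0; apply: cone_derivn; exact: cone_mono.
Qed.

Lemma ode {R : realType} n i :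
  ('X ^+ 2 - 1) * (Tc (R:=R) n)^`(i.+2) + ('X * (Tc n)^`(i.+1)) *+ (2 * i + 1)
  + (Tc n)^`(i) *+ (i * i) - (Tc n)^`(i) *+ (n * n) = 0.
Proof.
have dX2 : ('X ^+ 2 - 1 : {poly R})^`() = 'X *+ 2.
  by rewrite derivB derivXn derivC subr0 expr1.
elim: i => [|i IH].
  have [h1 h2] := dTV (R:=R) n.
  rewrite !derivnS derivn0 h1 derivMn mulrnAr h2.
  rewrite /= mulr0n addr0 mulr1n; ring.
have H := congr1 deriv IH.
have dm1 : (1 : {poly R})^`() = 0 by rewrite -polyC1 derivC.
rewrite deriv0 !(derivD, derivB, derivMn, derivMNn, derivN, derivM, derivX, dX2, dm1) -!derivnS in H.
rewrite -[RHS]H subr0; ring.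
Qed.

Lemma dT1_rec {R : realType} n i :
  ((Tc (R:=R) n)^`(i.+1)).[1] * (2 * i%:R + 1) =
  ((Tc (R:=R) n)^`(i)).[1] * (n%:R ^+ 2 - i%:R ^+ 2).
Proof.
have H := congr1 (horner^~ 1) (ode (R:=R) n i).
rewrite !(hornerD, hornerN, hornerMn, hornerM, hornerX, hornerXn, hornerC) ?expr1n ?subrr ?mul0r ?add0r ?mul1r in H.
apply/eqP; rewrite -subr_eq0; apply/eqP; rewrite -[RHS]H; ring.
Qed.

Lemma dT1_Bnk {R : realType} n k : ((Tc (R:=R) n)^`(k)).[1] = Bnk n k.
Proof.
elim: k => [|k IH].
  by rewrite derivn0 T1 /Bnk /pochhammer !big_ord0 expr0 mulr1 divr1.
have hQ : 0 < pochhammer (2^-1 : R) k.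
  apply: prodr_gt0 => i _; apply: ltr_pwDl => //; rewrite invr_gt0; lra.
have h1 : (2 * k%:R + 1 : R) != 0 by apply/lt0r_neq0; apply: ltr_pwDr => //; apply: mulr_ge0.
have h2 : (2^-1 + k%:R : R) != 0 by apply/lt0r_neq0; apply: ltr_pwDl => //; rewrite invr_gt0; lra.
have H := dT1_rec (R:=R) n k.
have -> : ((Tc (R:=R) n)^`(k.+1)).[1] = ((Tc (R:=R) n)^`(k)).[1] * (n%:R ^+ 2 - k%:R ^+ 2) / (2 * k%:R + 1).
  by rewrite -H mulfK.
rewrite IH /Bnk /pochhammer !big_ord_recr /=.
move: hQ; rewrite /pochhammer.
set Q := \prod_(j < k) _; set A := \prod_(i < k) _ => hQ.
have e2 : (2:R) * 2^-1 = 1 by rewrite mulfV // pnatr_eq0.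
have e : (2:R) ^+ k.+1 * (Q * (2^-1 + k%:R)) = 2 ^+ k * Q * (2 * k%:R + 1).
  transitivity ((2:R) ^+ k * Q * (2 * k%:R + 2 * 2^-1)); first by rewrite exprS; ring.
  by rewrite e2.
rewrite e.
have h3 : (2:R) ^+ k != 0 by apply: expf_neq0; rewrite pnatr_eq0.
have h4 : Q != 0 by apply/lt0r_neq0.
field; by rewrite h1 h3 h4.
Qed.



Lemma poly_eq0_ge1 {R : realType} (P : {poly R}) : (forall x, 1 <= x -> P.[x] = 0) -> P = 0.
Proof.
move=> h; apply/eqP; apply/negPn/negP => hP.
suff : (size P < size P)%N by rewrite ltnn.
rewrite -{1}(size_iota 0 (size P)) -(size_map (fun i : nat => i%:R + 1 : R)).
apply: max_poly_roots hP _ _.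
- apply/allP => x /mapP [i _ ->]; apply/rootP/h; have := ler0n R i; lra.
- rewrite map_inj_uniq ?iota_uniq // => a b /addIr /eqP; rewrite eqr_nat => /eqP //.
Qed.

Lemma coef_lin_pow {R : realType} (c d : R) m i :
  ((c%:P + d%:P * 'X) ^+ m)`_i = c ^+ (m - i) * d ^+ i *+ 'C(m, i).
Proof.
rewrite exprDn coef_sum.
under eq_bigr => l _ do rewrite coefMn exprMn -!polyC_exp mulrA -polyCM coefCM coefXn.
rewrite (eq_bigr (fun l : 'I_m.+1 => if (l == i :> nat) then c ^+ (m - i) * d ^+ i *+ 'C(m, i) else 0)); last first.
  move=> l _; case: (eqVneq (l : nat) i) => [<-|ne]; first by rewrite mulr1.
  by rewrite mulr0 mul0rn.
rewrite -big_mkcond /= (big_ord1_eq _ (fun _ => c ^+ (m - i) * d ^+ i *+ 'C(m, i))).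
by case: ltnP => // hi; rewrite bin_small // mulr0n.
Qed.

Definition qj {R : realType} n j : {poly R} := (1 - 'X) ^+ (n - j) * (1 + 'X) ^+ j.
Definition Kc {R : realType} n p j : R := (qj n j)`_p.

Lemma key_s {R : realType} n p (w s : R) :
  ((w + 1) + (1 - w) * s) ^+ (n - p) * ((1 - w) + (w + 1) * s) ^+ p *+ 'C(n, p)
  = \sum_(j < n.+1) 'C(n, j)%:R * w ^+ (n - j) * Kc n p j * (qj n j).[s].
Proof.
set c1 := w * (1 - s); set c2 := 1 + s.
have hc1 : c1 = w * (1 - s) by []. have hc2 : c2 = 1 + s by [].
have ea : c1 + c2 = (w + 1) + (1 - w) * s by rewrite hc1 hc2; ring.
have eb : c2 - c1 = (1 - w) + (w + 1) * s by rewrite hc1 hc2; ring.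
clearbody c1 c2.
set G : {poly R} := c1%:P * (1 - 'X) + c2%:P * (1 + 'X).
have hA : G = (c1 + c2)%:P + (c2 - c1)%:P * 'X.
  rewrite /G polyCD polyCB; ring.
have e1 : (G ^+ n)`_p = (c1 + c2) ^+ (n - p) * (c2 - c1) ^+ p *+ 'C(n, p) by rewrite hA coef_lin_pow.
have e2 : (G ^+ n)`_p = \sum_(j < n.+1) 'C(n, j)%:R * (c1 ^+ (n - j) * c2 ^+ j) * Kc n p j.
  rewrite /G exprDn coef_sum; apply: eq_bigr => j _.
  rewrite coefMn !exprMn.
  have -> : (c1%:P) ^+ (n - j) * (1 - 'X) ^+ (n - j) * ((c2%:P) ^+ j * (1 + 'X) ^+ j)
     = (c1 ^+ (n - j) * c2 ^+ j)%:P * qj n j by rewrite polyCM !polyC_exp /qj; ring.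
  by rewrite coefCM /Kc -mulr_natl; ring.
rewrite -ea -eb -e1 e2; apply: eq_bigr => j _.
rewrite /qj !hornerE hc1 hc2 exprMn /=. ring.
Qed.

Definition Lz {R : realType} p M (w : R) : R :=
  \sum_(s < p.+1) ('C(p + 0, p - s) * 'C(p + M, s))%:R *
     ((w + 1) ^+ M * ((w - 1) ^+ 2) ^+ s * ((w + 1) ^+ 2) ^+ (p - s)).

Lemma keyL {R : realType} n p M (w : R) : n = (M + 2 * p)%N ->
  'C(n, p)%:R * Lz p M w = \sum_(j < n.+1) 'C(n, j)%:R * w ^+ (n - j) * Kc n p j ^+ 2.
Proof.
move=> hn.
pose PA : {poly R} := (((w + 1)%:P + (1 - w)%:P * 'X) ^+ (n - p) *
   (((1 - w)%:P + (w + 1)%:P * 'X) ^+ p)) *+ 'C(n, p).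
pose PB : {poly R} := \sum_(j < n.+1) ('C(n, j)%:R * w ^+ (n - j) * Kc n p j) *: qj n j.
have hP : PA = PB.
  apply/eqP; rewrite -subr_eq0; apply/eqP; apply: poly_eq0_ge1 => s _.
  rewrite hornerD hornerN /PA /PB horner_sum hornerMn hornerM !horner_exp !hornerE.
  rewrite key_s; apply/eqP; rewrite subr_eq0; apply/eqP; apply: eq_bigr => j _.
  by rewrite hornerZ.
have := congr1 (fun P : {poly R} => P`_p) hP; rewrite /PA /PB coefMn coefM coef_sum /=.
under eq_bigr do rewrite !coef_lin_pow.
under [in X in _ = X -> _]eq_bigr do rewrite coefZ.
move=> H.
transitivity (\sum_(j < n.+1) ('C(n, j)%:R * w ^+ (n - j) * Kc n p j) * Kc n p j); last first.
  by apply: eq_bigr => j _; rewrite expr2 !mulrA.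
rewrite -H -[RHS]mulr_natl; congr (_ * _); rewrite /Lz; apply: eq_bigr => i _.
have hi := ltn_ord i.
rewrite hn (_ : (M + 2 * p - p - i = M + (p - i))%N); last by lia.
rewrite (_ : (p - (p - i) = i)%N); last by lia.
rewrite (_ : (M + 2 * p - p = p + M)%N); last by lia.
rewrite addn0 natrM exprD (_ : (w - 1) ^+ 2 = (1 - w) * (1 - w)); last by ring.
rewrite !exprMn /=; ring.
Qed.

Lemma zern_eval {R : realType} (n M p : nat) (z : R) : ((n - M) %/ 2)%N = p -> n = (M + 2 * p)%N -> z != 0 ->
  (2 * z) ^+ n * (zernikeR n M).[(z + z^-1) / 2] = Lz p M (z ^+ 2).
Proof.
move=> hp hn hz.
rewrite /zernikeR /jacobi hp hornerM hornerXn horner_comp horner_sum mulrA mulr_sumr /Lz.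
apply: eq_bigr => s _.
rewrite !hornerE /=.
set y := z + z^-1.
have h2 : (2 : R) != 0 by rewrite pnatr_eq0.
have ea : 2 * z * (y / 2) = z ^+ 2 + 1.
  by rewrite /y; field; rewrite ?hz ?h2.
have eb : (2 * z) ^+ 2 * (2^-1 * (2 * y * 2^-1 * y * 2^-1 - 1 - 1)) = (z ^+ 2 - 1) ^+ 2.
  by rewrite /y; field; rewrite ?hz ?h2.
have ec : (2 * z) ^+ 2 * (2^-1 * (2 * y * 2^-1 * y * 2^-1 - 1 + 1)) = (z ^+ 2 + 1) ^+ 2.
  by rewrite /y; field; rewrite ?hz ?h2.
have hs := ltn_ord s.
rewrite hn (_ : (M + 2 * p = M + 2 * s + 2 * (p - s))%N); last by lia.
rewrite !exprD !expr0 !mulr1 -eb -ec -ea !exprMn; ring.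
Qed.

Lemma Tz {R : realType} (z : R) k : z != 0 ->
  (Tc k).[(z + z^-1) / 2] = (z ^+ k + (z ^+ k)^-1) / 2.
Proof.
move=> hz.
have h2 : (2 : R) != 0 by rewrite pnatr_eq0.
suff H : forall k, (Tc k).[(z + z^-1) / 2] = (z ^+ k + (z ^+ k)^-1) / 2 /\
   (Tc k.+1).[(z + z^-1) / 2] = (z ^+ k.+1 + (z ^+ k.+1)^-1) / 2 by case: (H k).
elim=> [|j [IH1 IH2]]; split => //.
- by rewrite T0 hornerE expr0 invr1; field.
- by rewrite TS V0 T0 !hornerE expr1.
- rewrite T_rec hornerD hornerN hornerMn hornerM hornerX IH1 IH2 !exprS.
  have hj : z ^+ j != 0 by apply: expf_neq0.
  by rewrite !invfM; field; rewrite hj hz.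
Qed.

Definition ej n j := if (2 * j <= n)%N then (n - 2 * j)%N else (2 * j - n)%N.
Definition dc {R : realType} n p j : R := 'C(n, j)%:R * Kc n p j ^+ 2 / (2 ^+ n * 'C(n, p)%:R).

Lemma zT {R : realType} (z : R) n j : z != 0 -> (j <= n)%N ->
  z ^+ n * (Tc (ej n j)).[(z + z^-1) / 2] = ((z ^+ 2) ^+ (n - j) + (z ^+ 2) ^+ j) / 2.
Proof.
move=> hz hj; rewrite Tz // /ej.
have h2 : (2 : R) != 0 by rewrite pnatr_eq0.
have key : forall a e : nat, z ^+ a * z ^+ e * ((z ^+ e + (z ^+ e)^-1) / 2) = (z ^+ a * z ^+ e * z ^+ e + z ^+ a) / 2.
  move=> a e; have he : z ^+ e != 0 by apply: expf_neq0.
  by field; rewrite he.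
case: leqP => h.
- have en : z ^+ n = z ^+ (2 * j) * z ^+ (n - 2 * j) by rewrite -exprD; congr (_ ^+ _); lia.
  rewrite en key -!exprD -!exprM; congr ((z ^+ _ + z ^+ _) / 2); lia.
- have en : z ^+ n = z ^+ (2 * (n - j)) * z ^+ (2 * j - n) by rewrite -exprD; congr (_ ^+ _); lia.
  rewrite en key -!exprD -!exprM addrC; congr ((z ^+ _ + z ^+ _) / 2); lia.
Qed.

Lemma zI {R : realType} (n M p : nat) (z : R) : ((n - M) %/ 2)%N = p -> n = (M + 2 * p)%N -> z != 0 ->
  z ^+ n * (zernikeR n M).[(z + z^-1) / 2] = \sum_(j < n.+1) dc n p j * (z ^+ 2) ^+ (n - j).
Proof.
move=> hp hn hz.
have E := zern_eval n M p z hp hn hz.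
have K := keyL n p M (z ^+ 2) hn.
have h2 : (2 : R) ^+ n != 0 by apply: expf_neq0; rewrite pnatr_eq0.
have hC : ('C(n, p)%:R : R) != 0 by rewrite pnatr_eq0 -lt0n bin_gt0; lia.
have -> : \sum_(j < n.+1) dc n p j * (z ^+ 2) ^+ (n - j) =
   (\sum_(j < n.+1) 'C(n, j)%:R * (z ^+ 2) ^+ (n - j) * Kc n p j ^+ 2) / (2 ^+ n * 'C(n, p)%:R).
  by rewrite mulr_suml; apply: eq_bigr => j _; rewrite /dc; ring.
rewrite -K -E exprMn.
by field; rewrite h2 hC.
Qed.

Lemma zpoint {R : realType} (n M p : nat) (z : R) : ((n - M) %/ 2)%N = p -> n = (M + 2 * p)%N -> 0 < z ->
  (zernikeR n M).[(z + z^-1) / 2] = (\sum_(j < n.+1) dc n p j *: Tc (ej n j)).[(z + z^-1) / 2].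
Proof.
move=> hp hn hz0.
have hz : z != 0 by apply/lt0r_neq0.
have hzi : z^-1 != 0 by rewrite invr_eq0.
have I := zI n M p z hp hn hz.
have II := zI n M p z^-1 hp hn hzi.
rewrite invrK (addrC z^-1) in II.
set w := z ^+ 2 in I.
have hw : w != 0 by apply: expf_neq0.
have II' : z ^+ n * (zernikeR n M).[(z + z^-1) / 2] = \sum_(j < n.+1) dc n p j * w ^+ j.
  have -> : z ^+ n = w ^+ n * (z^-1) ^+ n.
    by rewrite /w exprVn -exprM mulnC exprM expr2 mulfK // expf_neq0.
  rewrite -mulrA II mulr_sumr; apply: eq_bigr => j _.
  have hj : (j <= n)%N by rewrite -ltnS.
  rewrite mulrCA; congr (_ * _).
  rewrite exprVn -/w exprVn.
  have -> : w ^+ n = w ^+ j * w ^+ (n - j) by rewrite -exprD subnKC.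
  rewrite mulfK //; exact: expf_neq0.
apply: (mulfI (expf_neq0 n hz)).
rewrite horner_sum mulr_sumr.
rewrite (eq_bigr (fun j : 'I_n.+1 => dc n p j * (((z ^+ 2) ^+ (n - j) + (z ^+ 2) ^+ j) / 2))); last first.
  by move=> j _; rewrite hornerZ mulrCA zT // -ltnS.
have -> : \sum_(j < n.+1) dc n p j * (((z ^+ 2) ^+ (n - j) + (z ^+ 2) ^+ j) / 2) =
   ((\sum_(j < n.+1) dc n p j * (z ^+ 2) ^+ (n - j)) + (\sum_(j < n.+1) dc n p j * (z ^+ 2) ^+ j)) / 2.
  by rewrite mulrDl !mulr_suml -big_split; apply: eq_bigr => j _ /=; ring.
rewrite -I -/w -II'; set a := _ * _.
have h2 : (2 : R) != 0 by rewrite pnatr_eq0.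
by field.
Qed.

Lemma zern_expand {R : realType} (n M p : nat) : ((n - M) %/ 2)%N = p -> n = (M + 2 * p)%N ->
  zernikeR (R:=R) n M = \sum_(j < n.+1) dc n p j *: Tc (ej n j).
Proof.
move=> hp hn; apply/eqP; rewrite -subr_eq0; apply/eqP; apply: poly_eq0_ge1 => x hx.
rewrite hornerD hornerN; apply/eqP; rewrite subr_eq0; apply/eqP.
set t := Num.sqrt (x ^+ 2 - 1).
have ht0 : 0 <= t by apply: sqrtr_ge0.
have ht : t ^+ 2 = x ^+ 2 - 1 by rewrite sqr_sqrtr // expr2; nra.
have hz : 0 < x + t by lra.
have hzi : (x + t)^-1 = x - t.
  apply: (mulfI (lt0r_neq0 hz)); rewrite mulfV; last exact: lt0r_neq0.
  move: ht; rewrite !expr2 => ht; nra.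
have hxz : ((x + t) + (x + t)^-1) / 2 = x by rewrite hzi; lra.
by have := zpoint n M p (x + t) hp hn hz; rewrite hxz.
Qed.



Lemma zR1 {R : realType} (n M : nat) : (zernikeR (R:=R) n M).[1] = 1.
Proof.
rewrite /zernikeR /jacobi hornerM hornerXn expr1n mul1r horner_comp !hornerE /=.
rewrite horner_sum big_ord_recl /= big1; last first.
  move=> s _; rewrite !hornerE /=.
  have e0 : (2:R) - 1 - 1 = 0 by ring.
  by rewrite e0 mulr0 /bump leq0n add1n exprS mul0r mulr0 mul0r.
rewrite subn0 binn bin0 muln1 scale1r expr0 mul1r addr0 !hornerE.
have e1 : (2:R)^-1 * (2 - 1 + 1) = 1 by rewrite subrK mulVf // pnatr_eq0.
by rewrite e1 expr1n.
Qed.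

Lemma derivn_sumZ {R : realType} k n (c : nat -> R) (F : nat -> {poly R}) :
  (\sum_(j < n) c j *: F j)^`(k) = \sum_(j < n) c j *: (F j)^`(k).
Proof. rewrite raddf_sum; apply: eq_bigr => j _; exact: derivnZ. Qed.

Lemma Fle {R : realType} k i l : (1 <= k)%N ->
  ((Tc (R:=R) i)^`(k)).[1] <= ((Tc (R:=R) (i + 2 * l))^`(k)).[1].
Proof.
move=> hk; elim: l => [|l IH]; first by rewrite muln0 addn0.
apply: le_trans IH _.
rewrite (_ : (i + 2 * l.+1 = (i + 2 * l).+2)%N); last by lia.
exact: dT_mono.
Qed.

Lemma Fej {R : realType} k n j : (1 <= k)%N -> (j <= n)%N ->
  ((Tc (R:=R) (ej n j))^`(k)).[1] <= ((Tc (R:=R) n)^`(k)).[1].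
Proof.
move=> hk hj; rewrite /ej; case: leqP => h.
- have := Fle (R:=R) k (n - 2 * j) j hk.
  by rewrite (_ : (n - 2 * j + 2 * j = n)%N) //; lia.
- have := Fle (R:=R) k (2 * j - n) (n - j) hk.
  by rewrite (_ : (2 * j - n + 2 * (n - j) = n)%N) //; lia.
Qed.

Lemma dc_ge0 {R : realType} n p j : 0 <= dc (R:=R) n p j.
Proof.
rewrite /dc; apply: divr_ge0; first by apply: mulr_ge0 => //; apply: sqr_ge0.
by apply: mulr_ge0 => //; apply: exprn_ge0.
Qed.

Lemma dc_ends {R : realType} n p : (p <= n)%N -> (1 <= n)%N ->
  dc (R:=R) n p 0 + dc n p n = 2%:R * (2^-1) ^+ n * ('C(n, p))%:R.
Proof.
move=> hp hn.
have K0 : Kc (R:=R) n p 0 ^+ 2 = ('C(n, p)%:R) ^+ 2.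
  rewrite /Kc /qj subn0 expr0 mulr1.
  rewrite (_ : (1 - 'X : {poly R}) = 1%:P + (-1)%:P * 'X); last by rewrite polyCN mulN1r.
  rewrite coef_lin_pow expr1n mul1r -mulr_natr exprMn -exprM mulnC exprM sqrrN !expr1n mul1r.
  by [].
have Kn : Kc (R:=R) n p n ^+ 2 = ('C(n, p)%:R) ^+ 2.
  rewrite /Kc /qj subnn expr0 mul1r.
  rewrite (_ : (1 + 'X : {poly R}) = 1%:P + 1%:P * 'X); last by rewrite mul1r.
  by rewrite coef_lin_pow !expr1n mul1r.
have h2 : (2 : R) ^+ n != 0 by apply: expf_neq0; rewrite pnatr_eq0.
have hC : ('C(n, p)%:R : R) != 0 by rewrite pnatr_eq0 -lt0n bin_gt0.
rewrite /dc K0 Kn bin0 binn exprVn.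
by field; rewrite h2 hC.
Qed.

Theorem mainTheorem2 (R : realType) (n : nat) (m : int) (k : nat) :
  (1 <= n)%N -> (`|m| <= n)%N -> ~~ odd (n - `|m|)%N -> (1 <= k)%N ->
  let D := (zernikeR (R := R) n `|m|%N)^`(k) in
  (forall r : R, 0 <= r <= 1 -> `|D.[r]| <= `|D.[1]|) /\
  (a_coef n `|m|%N * Bnk n k <= D.[1] /\ D.[1] <= Bnk n k).
Proof.
move=> hn1 hM hodd hk; rewrite /a_coef.
set M := `|m|%N in hM hodd *; set D := (zernikeR n M)^`(k).
set p := ((n - M) %/ 2)%N.
have e2 : (n - M = 2 * p)%N.
  rewrite /p divn2 -[LHS]odd_double_half (negbTE hodd) add0n -muln2 mulnC //.
have hn : n = (M + 2 * p)%N by lia.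
have hpn : (p <= n)%N by lia.
have hexp := zern_expand (R:=R) n M p erefl hn.
have hD : D = \sum_(j < n.+1) dc n p j *: (Tc (ej n j))^`(k).
  by rewrite /D hexp (derivn_sumZ k n.+1 (dc n p) (fun j => Tc (ej n j))).
have hcone : cone D.
  rewrite /D hexp; apply: cone_derivn.
  apply: (cone_sum n.+1 (fun j => dc n p j *: Tc (ej n j))) => j.
  by apply: cone_scale; [apply: dc_ge0 | apply: cone_T].
have hD1 : D.[1] = \sum_(j < n.+1) dc n p j * ((Tc (ej n j))^`(k)).[1].
  by rewrite hD horner_sum; apply: eq_bigr => j _; rewrite hornerZ.
have hsum : \sum_(j < n.+1) dc (R:=R) n p j = 1.
  have := congr1 (horner^~ 1) hexp; rewrite zR1 horner_sum => ->.
  by apply: eq_bigr => j _; rewrite hornerZ T1 mulr1.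
have Fge0 : forall i, 0 <= ((Tc (R:=R) i)^`(k)).[1].
  by move=> i; apply: cone_ge0; apply: cone_derivn; apply: cone_T.
split.
  move=> r /andP [r0 r1].
  rewrite (ger0_norm (cone_ge0 _ hcone)); apply: cone_bound => //.
  apply/andP; split => //; lra.
split.
- rewrite hD1 -dT1_Bnk -dc_ends //.
  have ej0 : ej n 0 = n by rewrite /ej muln0 leq0n subn0.
  have ejn : ej n n = n.
    rewrite /ej; case: leqP => h; lia.
  have hne : (ord_max : 'I_n.+1) != ord0 by rewrite -val_eqE /= -lt0n.
  rewrite (bigD1 ord0) //= (bigD1 ord_max) //= ej0 ejn addrA mulrDl.
  rewrite -[leLHS]addr0; apply: lerD => //.
  apply: sumr_ge0 => j _; apply: mulr_ge0; [exact: dc_ge0 | exact: Fge0].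
- rewrite hD1 -dT1_Bnk.
  apply: le_trans (_ : \sum_(j < n.+1) dc n p j * ((Tc n)^`(k)).[1] <= _).
    apply: ler_sum => j _; apply: ler_wpM2l; first exact: dc_ge0.
    by apply: Fej => //; rewrite -ltnS.
  by rewrite -mulr_suml hsum mul1r.
Qed.
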